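(* The set $\ell^\infty\setminus S$ is strongly $\mathfrak{c}$-algebrable in the algebra $\ell^\infty$ (with pointwise operations).
   Context: $\ell^\infty$ is the algebra of bounded real sequences with coordinatewise operations. $S=\{x\in\ell^\infty\colon\lim_n\frac{x_1+\dots+x_n}{n}\text{ exists}\}$. A subset $A$ of a commutative algebra $\mathcal L$ is strongly $\kappa$-algebrable if $A\cup\{0\}$ contains a $\kappa$-generated subalgebra (minimal number of generators of cardinality $\kappa$) which is isomorphic to a free algebra; equivalently, there is a set $Z\subset\mathcal L$ of cardinality $\kappa$ such that for every $n$, every non-zero polynomial $P$ in $n$ variables without constant term and all distinct $z_1,\dots,z_n\in Z$, $P(z_1,\dots,z_n)\in A\setminus\{0\}$. $\mathfrak c$ is the cardinality of the continuum. *)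

(* Defs.v *)
From Stdlib Require Import Reals.
From mathcomp Require Import all_boot all_algebra.
From mathcomp Require Import Rstruct.
From mathcomp Require Import mpoly.

Set Implicit Arguments.
Unset Strict Implicit.
Unset Printing Implicit Defensive.

Definition linf (x : nat -> R) : Prop :=
  exists M : R, forall k : nat, (Rabs (x k) <= M)%R.

Definition cesaro_mean (x : nat -> R) (n : nat) : R :=
  (sum_f_R0 x n / INR (S n))%R.

Definition inS (x : nat -> R) : Prop :=
  linf x /\ exists l : R, Un_cv (cesaro_mean x) l.

Definition eval_seq (n : nat) (P : {mpoly R[n]}) (z : 'I_n -> nat -> R)
  : nat -> R :=
  fun k => P.@[fun i => z i k].

(* Strong c-algebrability of A (subset of real sequences, l^infty algebra):
   an injectively indexed family f : R -> l^infty (so its range Z has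
   cardinality continuum) such that for all n, every nonzero P in n
   variables with zero constant term and distinct z_1..z_n in Z,
   P(z_1,...,z_n) lies in A and is nonzero. *)
Definition strongly_c_algebrable (A : (nat -> R) -> Prop) : Prop :=
  exists f : R -> (nat -> R),
    injective f /\ (forall r, linf (f r)) /\
    forall (n : nat) (P : {mpoly R[n]}) (t : 'I_n -> R),
      (P != 0)%R -> (P@_0%MM = 0)%R -> injective t ->
      A (eval_seq P (fun i => f (t i))) /\
      eval_seq P (fun i => f (t i)) <> (fun _ => 0%R).

(* Main.v *)
Require Import Defs.
From Stdlib Require Import Reals.
From mathcomp Require Import all_boot all_algebra.
From mathcomp Require Import Rstruct.
From mathcomp Require Import mpoly.
From mathcomp Require Import ring lra.
From Stdlib Require Import FunctionalExtensionality.
Import order.Order.TTheory GRing.Theory Num.Theory.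
Local Open Scope ring_scope.


Lemma meval_muni n (P : {mpoly R[n.+1]}) (v : 'I_n.+1 -> R) :
  P.@[v] = (map_poly (meval (fun i => v (widen_ord (leqnSn n) i))) (muni P)).[v ord_max].
Proof.
rewrite muniE mevalE raddf_sum horner_sum; apply: eq_bigr => m _ /=.
rewrite map_polyZ map_polyXn hornerZ hornerXn /= mevalZ mevalX big_ord_recr /=.
rewrite mulrA; congr (_ * _ * _); apply: eq_bigr => i _; by rewrite mnmE.
Qed.
Definition mtrunc {n} (m : 'X_{1..n.+1}) : 'X_{1..n} :=
  [multinom m (widen_ord (leqnSn n) i) | i < n].

Lemma mnm_split n (m m0 : 'X_{1..n.+1}) :
  (mtrunc m == mtrunc m0) && (m ord_max == m0 ord_max) = (m == m0).
Proof.
apply/idP/eqP; last by move=> ->; rewrite !eqxx.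
case/andP => /eqP h1 /eqP h2; apply/mnmP => i.
case: (ltnP i n) => hi.
  have -> : i = widen_ord (leqnSn n) (Ordinal hi) by apply: val_inj.
  by have := congr1 (fun mm : 'X_{1..n} => mm (Ordinal hi)) h1; rewrite /mtrunc !mnmE.
have -> : i = ord_max by apply: val_inj => /=; apply/eqP; rewrite eqn_leq hi -ltnS ltn_ord.
exact: h2.
Qed.

Lemma coef_muni n (P : {mpoly R[n.+1]}) (m0 : 'X_{1..n.+1}) :
  ((muni P)`_(m0 ord_max))@_(mtrunc m0) = P@_m0.
Proof.
rewrite muniE coef_sum raddf_sum /=.
rewrite [in RHS](mpolyE P) raddf_sum /=; apply: eq_bigr => m _.
rewrite coefZ coefXn mulr_natr mcoeffMn !mcoeffZ !mcoeffX.
case: (eqVneq m m0) => [->|ne]; first by rewrite /mtrunc !eqxx /= mulr1n mulr1.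
have := @mnm_split _ m m0; rewrite (negbTE ne) eq_sym [m0 ord_max == _]eq_sym.
rewrite /mtrunc.
by case: (_ == _); case: (_ == _) => //= _; rewrite ?mulr0n ?mulr1n ?mulr1 ?mulr0.
Qed.

Definition sv (v : nat) : R := (v.+1%:R)^-1.

Lemma sv_inj : injective sv.
Proof.
move=> a b; rewrite /sv => /invr_inj /eqP; rewrite eqr_nat eqSS => /eqP //.
Qed.

Lemma grid n (P : {mpoly R[n]}) : P != 0 ->
  exists v : 'I_n -> nat, P.@[fun i => sv (v i)] != 0.
Proof.
elim: n P => [|n IH] P nz.
  exists (fun _ => 0%N); rewrite (nvar0_mpolyC P) mevalC.
  by move: nz; rewrite {1}(nvar0_mpolyC P) mpolyC_eq0.
have [m0 hm0] : exists m0, m0 \in msupp P.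
  case E: (msupp P) => [|m0 s]; first by move: nz; rewrite (msuppnil0 E) eqxx.
  by exists m0; rewrite inE eqxx.
set Q := muni P; set k := m0 ord_max.
have nzk : Q`_k != 0.
  apply/eqP => h; move: hm0; rewrite mcoeff_msupp -coef_muni -/Q -/k h mcoeff0 eqxx //.
have [v' hv'] := IH _ nzk.
set q := map_poly (meval (fun i => sv (v' i))) Q.
have nzq : q != 0.
  apply/eqP => /(congr1 (fun p : {poly R} => p`_k)).
  by rewrite coef0 coef_map_id0 ?meval0 //; apply/eqP.
have [j hj] : exists j, ~~ root q (sv j).
  case: (boolP (all (root q) (map sv (iota 0 (size q))))) => [hall|].
    have := max_poly_roots nzq hall.
    rewrite map_inj_uniq ?iota_uniq ?size_map ?size_iota ?ltnn //; [by move=> /(_ isT) | exact: sv_inj].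
  by move=> /allPn [x /mapP [j _ ->] hx]; exists j.
exists (fun i : 'I_n.+1 => if insub (val i) is Some i' then v' i' else j).
rewrite meval_muni.
have e1 : forall i : 'I_n, insub (val (widen_ord (leqnSn n) i)) = Some i.
  move=> i; case: insubP => [u _ hu|]; last by rewrite /= ltn_ord.
  by congr Some; apply: val_inj; rewrite hu.
have e2 : insub (val (@ord_max n)) = None :> option 'I_n by rewrite insubN ?ltnn.
rewrite e2.
have -> : map_poly (meval (fun i : 'I_n => sv (if insub (val (widen_ord (leqnSn n) i)) is Some i' then v' i' else j))) Q = q.
  apply: eq_map_poly => p; apply: meval_eq => i; by rewrite e1.
exact: hj.
Qed.


Lemma sep n (t : 'I_n -> R) : injective t ->
  exists N : nat, injective (fun i => Num.floor (N%:R * t i)).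
Proof.
move=> tinj.
pose N := (\sum_(p : 'I_n * 'I_n | p.1 != p.2) (Num.trunc ((`|t p.1 - t p.2|^-1)%R)).+1)%N.
exists N => i j h; apply/eqP; apply: contraT => ne.
have hN : ((Num.trunc ((`|t i - t j|^-1)%R)).+1 <= N)%N.
  by rewrite /N (bigD1 (i,j)) //= leq_addr.
have d0 : 0 < `|t i - t j|.
  by rewrite normr_gt0 subr_eq0 (inj_eq tinj).
have h1 : `|t i - t j|^-1 < N%:R.
  apply: (lt_le_trans (truncnS_gt _)); by rewrite ler_nat.
have h2 : 1 < N%:R * `|t i - t j|.
  by rewrite -(ltr_pM2r d0) mulVf ?gt_eqF // in h1.
have := floor_itv (N%:R * t i); have := floor_itv (N%:R * t j).
rewrite h intrD /= => /andP [a1 a2] /andP [b1 b2].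
have : `|N%:R * t i - N%:R * t j| < 1.
  rewrite ltr_norml; apply/andP; split; lra.
by rewrite -mulrBr normrM normr_nat ltNge (ltW h2).
Qed.

Definition lookup (L : seq (int * nat)) (z : int) : nat :=
  nth 0%N (unzip2 L) (index z (unzip1 L)).

Lemma lookupP n (z : 'I_n -> int) (v : 'I_n -> nat) : injective z ->
  forall i, lookup [seq (z j, v j) | j <- enum 'I_n] (z i) = v i.
Proof.
move=> zinj i; rewrite /lookup.
have h1 : forall s : seq 'I_n, unzip1 [seq (z j, v j) | j <- s] = [seq z j | j <- s].
  by elim => //= a s ->.
have h2 : forall s : seq 'I_n, unzip2 [seq (z j, v j) | j <- s] = [seq v j | j <- s].
  by elim => //= a s ->.
rewrite h1 h2 index_map // (nth_map i) ?index_mem ?mem_enum // nth_index // mem_enum //.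
Qed.


Lemma cm_pow (x : nat -> R) e :
  cesaro_mean x (2 ^ e).-1 = (\sum_(0 <= k < 2 ^ e) x k) / (2 ^ e)%:R.
Proof.
rewrite /cesaro_mean sum_f_R0E INRE prednK ?expn_gt0 //.
Qed.

Lemma cm_step (x : nat -> R) e c :
  (forall k, (2 ^ e <= k < 2 ^ e.+1)%N -> x k = c) ->
  cesaro_mean x (2 ^ e.+1).-1 = cesaro_mean x (2 ^ e).-1 / 2 + c / 2.
Proof.
move=> hx; rewrite !cm_pow.
rewrite (@big_cat_nat _ _ _ (2 ^ e)) //=; last by rewrite leq_exp2l.
have -> : \sum_(2 ^ e <= i < 2 ^ e.+1) x i = \sum_(2 ^ e <= i < 2 ^ e.+1) c.
  by apply: eq_big_nat => k hk; apply: hx.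
rewrite sumr_const_nat expnS.
have p0 : (2 ^ e)%:R != 0 :> R by rewrite pnatr_eq0 -lt0n expn_gt0.
set p := (2 ^ e)%N in p0 *.
have -> : (2 * p - p)%N = p by rewrite mul2n -addnn addnK.
rewrite natrM.
set s := \sum_(0 <= i < p) x i.
by field.
Qed.

Lemma not_cesaro (x : nat -> R) (c : R) : c != 0 ->
  (forall E, exists e, (E <= e)%N /\ forall k, (2 ^ e <= k < 2 ^ e.+1)%N -> x k = 0) ->
  (forall E, exists e, (E <= e)%N /\ forall k, (2 ^ e <= k < 2 ^ e.+1)%N -> x k = c) ->
  ~ exists l, Un_cv (cesaro_mean x) l.
Proof.
move=> c0 hz hc [l hl].
have eps0 : (0 < `|c| / 8) by rewrite divr_gt0 ?normr_gt0.
set eps := `|c| / 8 in eps0 *.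
have eps0' : Rlt 0 eps by apply/RltP.
have [N hN] := hl _ eps0'.
have near : forall e, (N <= e)%N -> `|cesaro_mean x (2 ^ e).-1 - l| < eps.
  move=> e he; apply/RltP; rewrite -RabsE -RminusE; apply: hN.
  apply/ssrnat.leP; apply: (leq_trans he); rewrite -ltnS prednK ?expn_gt0 //.
  exact: ltn_expl.
have [e0 [he0 hx0]] := hz N.
have [e1 [he1 hx1]] := hc N.
have s0 := cm_step _ _ _ hx0; have s1 := cm_step _ _ _ hx1.
have n0 := near _ he0; have n0' := near e0.+1 (leqW he0).
have n1 := near _ he1; have n1' := near e1.+1 (leqW he1).
rewrite s0 in n0'; rewrite s1 in n1'.
move: n0 n0' n1 n1'.
set a0 := cesaro_mean x _; set a1 := cesaro_mean x _.
rewrite /eps !ltr_norml => /andP [H H0] /andP [H1 H2] /andP [H3 H4] /andP [H5 H6].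
have [cn|cp] : c < 0 \/ 0 < c.
  by move: c0; rewrite neq_lt => /orP.
- rewrite ltr0_norm // in H H0 H1 H2 H3 H4 H5 H6; lra.
- rewrite gtr0_norm // in H H0 H1 H2 H3 H4 H5 H6; lra.
Qed.

Definition D := (nat * seq (int * nat))%type.
Definition val (d : D) (t : R) : R := sv (lookup d.2 (Num.floor (d.1%:R * t))).
Definition bdE (e : nat) : option D :=
  match logn 2 e.+1 with 0%N => None | m.+1 => unpickle m end.
Definition FF (t : R) (k : nat) : R :=
  if bdE (trunc_log 2 k) is Some d then val d t else 0.

Lemma tl_block e k : (2 ^ e <= k < 2 ^ e.+1)%N -> trunc_log 2 k = e.
Proof. exact: trunc_log_eq. Qed.

Lemma zero_blocks E : exists e, (E <= e)%N /\ bdE e = None.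
Proof.
exists E.*2; split; first by rewrite -addnn leq_addr.
by rewrite /bdE logn_coprime // coprime2n /= odd_double.
Qed.

Lemma data_blocks (d : D) E : exists e, (E <= e)%N /\ bdE e = Some d.
Proof.
have pos : (0 < 2 ^ (pickle d).+1 * (E.*2).+1)%N by rewrite muln_gt0 expn_gt0.
exists (2 ^ (pickle d).+1 * (E.*2).+1).-1; split.
  rewrite -ltnS prednK //; apply: (@leq_trans (E.*2).+1).
    by rewrite ltnS -addnn leq_addr.
  by apply: leq_pmull; rewrite expn_gt0.
rewrite /bdE prednK // lognM ?expn_gt0 // pfactorK // logn_coprime ?coprime2n /= ?odd_double //.
by rewrite addn0 pickleK.
Qed.

Lemma val_bound d t : `|val d t| <= 1.
Proof.
rewrite /val /sv ger0_norm ?invr_ge0 ?ler0n // invf_le1 ?ltr0Sn //.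
by rewrite ler1n.
Qed.

Lemma FF_bound t k : `|FF t k| <= 1.
Proof. rewrite /FF; case: (bdE _) => [d|]; [exact: val_bound | by rewrite normr0]. Qed.

Lemma meval_bound n (P : {mpoly R[n]}) (w : 'I_n -> R) :
  (forall i, `|w i| <= 1) -> `|P.@[w]| <= \sum_(m <- msupp P) `|P@_m|.
Proof.
move=> hw; rewrite mevalE; apply: le_trans (ler_norm_sum _ _ _) _.
apply: ler_sum => m _; rewrite normrM; apply: ler_piMr => //.
rewrite normr_prod; apply: prodr_ile1 => i _.
by rewrite normrX exprn_ge0 ?normr_ge0 //= exprn_ile1 ?normr_ge0 ?hw.
Qed.

Lemma exists_d n (P : {mpoly R[n]}) (t : 'I_n -> R) : P != 0 -> injective t ->
  exists d : D, P.@[fun i => val d (t i)] != 0.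
Proof.
move=> nz tinj; have [v hv] := grid _ _ nz; have [N hN] := sep _ _ tinj.
exists (N, [seq (Num.floor (N%:R * t j), v j) | j <- enum 'I_n]).
suff -> : P.@[fun i => val (N, [seq (Num.floor (N%:R * t j), v j) | j <- enum 'I_n]) (t i)]
  = P.@[fun i => sv (v i)] by [].
by apply: meval_eq => i; rewrite /val /= (lookupP _ _ v hN).
Qed.

Lemma meval_zero n (P : {mpoly R[n]}) : P@_0%MM = 0 -> P.@[fun _ => 0] = 0.
Proof.
move=> P0; rewrite -[RHS]P0 [in RHS](mpolyE P) raddf_sum /= mevalE.
apply: eq_bigr => m _; rewrite mcoeffZ mcoeffX; congr (_ * _).
case: (eqVneq m 0%MM) => [->|ne].
  by rewrite big1 // => i _; rewrite mnm0E expr0.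
have [i hi] : exists i, m i != 0%N.
  apply/existsP; apply: contraR ne; rewrite negb_exists => /forallP h.
  by apply/eqP/mnmP => i; rewrite mnm0E; apply/eqP; have := h i; rewrite negbK.
by rewrite (bigD1 i) //= expr0n (negbTE hi) mul0r.
Qed.

Lemma main n (P : {mpoly R[n]}) (t : 'I_n -> R) :
  P != 0 -> P@_0%MM = 0 -> injective t ->
  (linf (eval_seq P (fun i => FF (t i))) /\ ~ inS (eval_seq P (fun i => FF (t i)))) /\
  eval_seq P (fun i => FF (t i)) <> (fun _ => 0).
Proof.
move=> nz P0 tinj.
have [d hd] := exists_d _ _ _ nz tinj.
set c := P.@[fun i => val d (t i)] in hd.
set x := eval_seq P (fun i => FF (t i)).
have hz : forall E, exists e, (E <= e)%N /\ forall k, (2 ^ e <= k < 2 ^ e.+1)%N -> x k = 0.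
  move=> E; have [e [he hb]] := zero_blocks E; exists e; split => // k hk.
  rewrite /x /eval_seq /FF (tl_block _ _ hk) hb meval_zero //.
have hc : forall E, exists e, (E <= e)%N /\ forall k, (2 ^ e <= k < 2 ^ e.+1)%N -> x k = c.
  move=> E; have [e [he hb]] := data_blocks d E; exists e; split => // k hk.
  by rewrite /x /eval_seq /FF (tl_block _ _ hk) hb.
split; [split|].
- exists (\sum_(m <- msupp P) `|P@_m|) => k.
  by apply: meval_bound => i; exact: (FF_bound (t i) k).
- by move=> [_ hconv]; apply: (not_cesaro x c hd hz hc hconv).
- move=> h0; have [e [_ he]] := hc 0%N.
  have hk : (2 ^ e <= 2 ^ e < 2 ^ e.+1)%N by rewrite leqnn /= ltn_exp2l.
  have := he _ hk; rewrite h0 => c0.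
  by move: hd; rewrite -c0 eqxx.
Qed.

Lemma FF_inj : injective FF.
Proof.
move=> r1 r2 hF; case: (eqVneq r1 r2) => // ne; exfalso.
pose P2 : {mpoly R[2]} := 'X_ord0 - 'X_(lift ord0 ord0).
pose tt := fun i : 'I_2 => if i == ord0 then r1 else r2.
have ttinj : injective tt.
  move=> i j; rewrite /tt.
  case: (eqVneq i ord0) => [->|hi]; case: (eqVneq j ord0) => [->|hj] //.
  - by move=> e; move: ne; rewrite e eqxx.
  - by move=> e; move: ne; rewrite e eqxx.
  - move=> _; apply: val_inj.
    move: hi hj; case: i => [[|[|i]] ?] //; case: j => [[|[|j]] ?] //.
have nz : P2 != 0.
  apply/eqP => /(congr1 (fun p : {mpoly R[2]} => p@_(U_(ord0))%MM)).
  rewrite mcoeffB !mcoeffXU mcoeff0 eqxx /=.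
  by move/eqP; rewrite subr0 oner_eq0.
have P0 : P2@_0%MM = 0.
  rewrite mcoeffB !mcoeffX.
  have h : forall i : 'I_2, ((U_(i))%MM == 0%MM) = false.
    move=> i; apply/negbTE/eqP => h.
    by have := congr1 (@mdeg 2) h; rewrite mdeg1 mdeg0.
  by rewrite !h subrr.
have [_ hne] := main _ P2 tt nz P0 ttinj.
apply: hne; apply: functional_extensionality => k.
rewrite /eval_seq mevalB !mevalXU /tt /= hF subrr //.
Qed.

Theorem theorem3p5 :
  strongly_c_algebrable (fun x => linf x /\ ~ inS x).
Proof.
exists FF; split; first exact: FF_inj.
split.
- move=> r; exists 1 => k; exact: FF_bound.
- move=> n P t nz P0 tinj; exact: main.
Qed.
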